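(* Let $G=(V,E)$ be a graph and $T\subseteq E$ a spanning tree of $G$. Let $e\in T$ and $s_e\in E\setminus T$ be such that $T'=T-e+s_e$ is a spanning tree. Let $f\in T\setminus\{e\}$ and $s\in E\setminus(T\cup\{s_e\})$ (so $f\in T'$ and $s\notin T'$). Let $C_e$ be the unique cycle in $T+s_e$, $C_s$ the unique cycle in $T+s$, $C'_e$ the unique cycle in $T'+e$, and $C'_s$ the unique cycle in $T'+s$. Suppose that neither of the following holds: (i) $f\in C_e$ and $e\in C_s$; (ii) $f\in C'_e$ and $s_e\in C'_s$. Then $T-f+s$ is connected if and only if $T'-f+s$ is connected. *)

(* Defs.v *)
(* A simple graph G = (V,E): V a finite type of vertices,
   E a set of 2-element vertex subsets. Edge sets are {set {set V}}. *)
From mathcomp Require Import all_boot.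
Set Implicit Arguments. Unset Strict Implicit. Unset Printing Implicit Defensive.

Section Graphs.
Variable V : finType.

Definition simple_edges (E : {set {set V}}) : Prop :=
  forall c, c \in E -> #|c| = 2.

Definition adj (F : {set {set V}}) : rel V := fun x y => [set x; y] \in F.

Definition connected_sp (F : {set {set V}}) : Prop :=
  forall x y : V, connect (adj F) x y.

Definition supp (C : {set {set V}}) : {set V} :=
  [set v | [exists c in C, v \in c]].

Definition is_cycle (C : {set {set V}}) : Prop :=
  [/\ C != set0,
      (forall c, c \in C -> #|c| = 2),
      (forall v, v \in supp C -> #|[set c in C | v \in c]| = 2) &
      (forall x y, x \in supp C -> y \in supp C -> connect (adj C) x y)].

Definition acyclic (F : {set {set V}}) : Prop :=
  forall C : {set {set V}}, C \subset F -> ~ is_cycle C.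

Definition spanning_tree (E T : {set {set V}}) : Prop :=
  [/\ T \subset E, connected_sp T & acyclic T].

End Graphs.

(* Main.v *)
Require Import Defs.
From mathcomp Require Import all_boot.
Set Implicit Arguments. Unset Strict Implicit. Unset Printing Implicit Defensive.

Section Aux.
Variable V : finType.
Implicit Types (F : {set {set V}}).

Lemma adj_sym F : symmetric (adj F).
Proof. by move=> x y; rewrite /adj setUC. Qed.

Lemma conn_sym F x y : connect (adj F) x y = connect (adj F) y x.
Proof. exact: (sym_connect_sym (adj_sym F)). Qed.

Lemma conn_mono F (G : {set {set V}}) x y : F \subset G -> connect (adj F) x y -> connect (adj G) x y.
Proof.
move=> FG; apply: connect_sub => u v huv; apply: connect1.
by rewrite /adj (subsetP FG).
Qed.

Lemma conn_ind (e : rel V) (P : V -> Prop) x :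
  P x -> (forall u v, P u -> e u v -> P v) -> forall y, connect e x y -> P y.
Proof.
move=> Px step y /connectP [p pth ->]; elim: p x Px pth => //= z p IH x Px /andP [exz pz].
by apply: IH (step _ _ Px exz) pz.
Qed.

Lemma conn_split F a1 a2 u v : connect (adj F) u v ->
  let D := connect (adj (F :\ [set a1; a2])) in
  D u v \/ (D u a1 /\ D a2 v) \/ (D u a2 /\ D a1 v).
Proof.
move=> huv D; move: v huv; apply: conn_ind.
  by left; apply: connect0.
move=> w v Pw hwv.
have key : forall z, z \in [set a1; a2] -> (D u a1 \/ D u a2) ->
   D u z \/ (D u a1 /\ D a2 z) \/ (D u a2 /\ D a1 z).
  move=> z /set2P [->|->] [h|h].
  - by left.
  - by right; right; split=> //; apply: connect0.
  - by right; left; split=> //; apply: connect0.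
  - by left.
have Dtr : forall p q r, D p q -> D q r -> D p r by move=> p q r; apply: connect_trans.
case: (boolP ([set w; v] == [set a1; a2])) => [/eqP E|NE].
  have wa : w \in [set a1; a2] by rewrite -E set21.
  have va : v \in [set a1; a2] by rewrite -E set22.
  apply: key => //.
  case: Pw => [h|[[h _]|[h _]]]; [|by left|by right].
  by case/set2P: wa h => ->; [left|right].
have Dwv : D w v by apply: connect1; rewrite /adj !inE NE.
case: Pw => [h|[[h1 h2]|[h1 h2]]].
- by left; apply: Dtr Dwv.
- by right; left; split=> //; apply: Dtr Dwv.
- by right; right; split=> //; apply: Dtr Dwv.
Qed.

Lemma conn_two F a1 a2 : connected_sp F -> forall v,
  connect (adj (F :\ [set a1; a2])) a1 v \/ connect (adj (F :\ [set a1; a2])) a2 v.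
Proof.
move=> cF v; case: (conn_split a1 a2 (cF a1 v)) => [h|[[_ h]|[_ h]]].
- by left.
- by right.
- by left.
Qed.

End Aux.

Section Aux2.
Variable V : finType.
Implicit Types (F C : {set {set V}}).

Lemma deg_sum (W : finType) (C : {set W}) (P : pred W) : #|[set d in C | P d]| = \sum_(d in C) P d.
Proof.
rewrite -sum1_card big_mkcond [RHS]big_mkcond; apply: eq_bigr => d _.
by rewrite !inE; case: (d \in C); case: (P d).
Qed.

Lemma cycle_edge_conn C x y : is_cycle C -> [set x; y] \in C ->
  connect (adj (C :\ [set x; y])) x y.
Proof.
case=> _ C2 Cdeg _ xyC.
have xy : x != y by have := C2 _ xyC; rewrite cards2; case: (x != y).
set c := [set x; y]; set D := C :\ c.
apply/negPn/negP => nxy.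
set A := [set v | connect (adj D) x v].
have xA : x \in A by rewrite inE connect0.
have yA : y \notin A by rewrite inE.
have AC : forall v, v \in A -> v \in supp C.
  move=> v; rewrite inE; move: v; apply: conn_ind.
    by rewrite inE; apply/existsP; exists c; rewrite xyC set21.
  move=> u v _; rewrite /adj /D => /setD1P [_ h].
  by rewrite inE; apply/existsP; exists [set u; v]; rewrite h set22.
have Aclosed : forall p q, [set p; q] \in D -> (p \in A) = (q \in A).
  move=> p q h; rewrite !inE; apply/idP/idP => hh.
    by apply: connect_trans hh (connect1 _).
  apply: connect_trans hh (connect1 _); by rewrite /adj setUC.
have even : 2 %| \sum_(v in A) \sum_(d in D) (v \in d).
  rewrite exchange_big /=; apply: dvdn_sum => d dD.
  have dC : d \in C by move: dD; rewrite /D inE => /andP [].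
  have /cards2P [p [q [pq dE]]] : #|d| == 2 by rewrite C2.
  have := Aclosed p q; rewrite -dE => /(_ dD) Apq.
  rewrite -(deg_sum A (fun v => v \in d)).
  have -> : [set v in A | v \in d] = (if p \in A then d else set0).
    clearbody A; apply/setP => v; rewrite dE !inE.
    case vp: (v == p); first by rewrite (eqP vp); case: (p \in A); rewrite ?inE ?eqxx.
    case vq: (v == q); last by rewrite andbF; case: (p \in A); rewrite ?inE ?vp ?vq.
    by rewrite (eqP vq) -Apq; case: (p \in A); rewrite ?inE ?eqxx ?orbT.
  by case: ifP => _; rewrite ?cards0 // dE cards2 pq.
have degv : forall v, v \in A -> \sum_(d in D) (v \in d) + (v == x) = 2.
  move=> v vA; rewrite -(Cdeg v (AC v vA)) (deg_sum C (fun d => v \in d)).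
  rewrite [RHS](bigD1 c) //= addnC; congr (_ + _).
    rewrite /c !inE; case: (v == x) => //=; case vy: (v == y) => //.
    by move: yA; rewrite -(eqP vy) vA.
  by apply: eq_bigl => d; rewrite /D !inE andbC.
have : \sum_(v in A) (\sum_(d in D) (v \in d) + (v == x)) = \sum_(v in A) 2.
  by apply: eq_bigr => v vA; rewrite degv.
rewrite big_split /= [X in _ + X = _](bigD1 x) //= eqxx.
rewrite [X in _ + (_ + X) = _]big1; last by move=> v /andP [_ /negbTE ->].
rewrite addn0 sum_nat_const => E2.
move: even; rewrite dvdn2 => ev.
by have := congr1 odd E2; rewrite oddD oddM /= (negbTE ev) andbF.
Qed.

End Aux2.

Lemma next_next_neq (T : eqType) (c : seq T) u :
  uniq c -> 2 < size c -> u \in c -> next c (next c u) != u.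
Proof.
move=> uc sc uin; case: (rot_to uin) => i s' rotE.
rewrite -!(next_rot i uc) rotE.
have : uniq (u :: s') by rewrite -rotE rot_uniq.
have : 2 < size (u :: s') by rewrite -rotE size_rot.
case: s' {rotE} => [|w [|z r]] //= _.
rewrite !inE negb_or => /andP [/andP [uw /norP [uz _]] /andP [wzr _]].
by rewrite eqxx (eq_sym w u) (negbTE uw) eqxx eq_sym.
Qed.

Section Aux3.
Variable V : finType.
Implicit Types (F C : {set {set V}}).

Lemma acyclic_sep F x y : (forall c, c \in F -> #|c| = 2) -> acyclic F ->
  [set x; y] \in F -> ~~ connect (adj (F :\ [set x; y])) x y.
Proof.
move=> F2 acF xyF; apply/negP => /connectP [p0 pth0].
case: (shortenP pth0) => p pth up _ ylast.
have xy : x != y by have := F2 _ xyF; rewrite cards2; case: (x != y).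
set F' := F :\ [set x; y] in pth.
have F'F : subrel (adj F') (adj F) by move=> u v; rewrite /adj /F' inE => /andP [].
have pathF : path (adj F) x p by apply: sub_path pth.
set c := x :: p.
have cyc : cycle (adj F) c by rewrite /c /= rcons_path pathF -ylast /adj setUC xyF.
have sc : 2 < size c.
  move: pth ylast; rewrite /c; case: p {up pathF cyc c} => [|z [|w r]] //=.
    by move=> _ yx; move: xy; rewrite yx eqxx.
  by rewrite andbT /adj /F' => + yz; rewrite -yz !inE eqxx.
set C := [set [set v; next c v] | v in c].
have nextF : forall v, v \in c -> [set v; next c v] \in F.
  by move=> v vc; apply: (next_cycle cyc vc).
have suppc : forall v, v \in supp C -> v \in c.
  move=> v; rewrite inE => /existsP [d /andP [/imsetP [u uc ->] vd]].
  by case/set2P: vd => ->; rewrite ?mem_next.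
apply: (acF C).
  by apply/subsetP => d /imsetP [v vc ->]; apply: nextF.
split.
- by apply/set0Pn; exists [set x; next c x]; apply: imset_f; rewrite mem_head.
- by move=> d /imsetP [v vc ->]; apply: F2; apply: nextF.
- move=> v /suppc vc.
  have E : [set d in C | v \in d] = [set [set prev c v; v]; [set v; next c v]].
    apply/setP => d; apply/idP/idP.
      rewrite in_set => /andP [/imsetP [u uc ->] vd]; case/set2P: vd => ->.
        by rewrite set22.
      by rewrite prev_next // set21.
    case/set2P => ->; rewrite in_set; apply/andP; split.
    - by apply/imsetP; exists (prev c v); rewrite ?mem_prev // next_prev.
    - by rewrite set22.
    - by apply: imset_f.
    - by rewrite set21.
  have n1 : prev c v != v.
    have := F2 _ (nextF _ (etrans (mem_prev c v) vc)).
    by rewrite next_prev // cards2; case: (prev c v != v).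
  have n2 : prev c v != next c v.
    have := next_next_neq up sc (etrans (mem_prev c v) vc).
    by rewrite next_prev // eq_sym.
  rewrite E cards2; suff -> : [set prev c v; v] != [set v; next c v] by [].
  apply/eqP => h; have : prev c v \in [set v; next c v] by rewrite -h set21.
  by case/set2P => h'; [move: n1 | move: n2]; rewrite h' eqxx.
- have pC : path (adj C) x p.
    have := cycle_next up; rewrite /c /= rcons_path => /andP [h _].
    apply: (sub_in_path (P := mem c)) h; last by apply/allP.
    by move=> u w uc _ /eqP <-; rewrite /adj; apply: imset_f.
  move=> a b /suppc ac /suppc bc.
  apply: (connect_trans (y := x)); first by rewrite conn_sym; apply: path_connect pC _ ac.
  exact: path_connect pC _ bc.
Qed.

End Aux3.

Section Aux4.
Variable V : finType.
Implicit Types (F C T : {set {set V}}).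

Lemma pair_conn F a b u w : u \in [set a; b] -> w \in [set a; b] ->
  connect (adj F) a b -> connect (adj F) u w.
Proof.
move=> /set2P [->|->] /set2P [->|->] h //; rewrite ?connect0 //.
by rewrite conn_sym.
Qed.

Lemma cyc_mem T f1 f2 s1 s2 Cs : (forall c, c \in T -> #|c| = 2) -> acyclic T ->
  [set f1; f2] \in T -> [set s1; s2] \notin T ->
  is_cycle Cs -> Cs \subset T :|: [set [set s1; s2]] ->
  ([set f1; f2] \in Cs) = ~~ connect (adj (T :\ [set f1; f2])) s1 s2.
Proof.
move=> T2 acT fT sT cyc CsT; apply/idP/idP.
  move=> fC; apply/negP => hs.
  have h := cycle_edge_conn cyc fC.
  have : connect (adj (T :\ [set f1; f2])) f1 f2.
    apply: (connect_sub _ h) => u w; rewrite /adj inE => /andP [nf uwC].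
    have := subsetP CsT _ uwC; rewrite !inE => /orP [uwT|/eqP E].
      by apply: connect1; rewrite /adj in_setD1 uwT andbT; rewrite !inE in nf.
    by apply: pair_conn hs; rewrite -E ?set21 ?set22.
  by apply/negP; apply: acyclic_sep.
move=> ns; apply/negPn/negP => nf.
have sC : [set s1; s2] \in Cs.
  apply/negPn/negP => nsC; apply: (acT Cs) cyc; apply/subsetP => d dC.
  have := subsetP CsT _ dC; rewrite !inE => /orP [//|/eqP E].
  by move: nsC; rewrite -E dC.
have h := cycle_edge_conn cyc sC.
move: ns; rewrite (conn_mono _ h) //.
apply/subsetP => d; rewrite !inE => /andP [ds dC].
have := subsetP CsT _ dC; rewrite !inE => /orP [dT|/eqP E]; last by rewrite E eqxx in ds.
by rewrite dT andbT; apply: contraNN nf => /eqP <-.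
Qed.

Lemma conn_rem T f1 f2 s1 s2 : (forall c, c \in T -> #|c| = 2) -> acyclic T ->
  connected_sp T -> [set f1; f2] \in T ->
  (connected_sp (T :\ [set f1; f2] :|: [set [set s1; s2]]) <->
   ~~ connect (adj (T :\ [set f1; f2])) s1 s2).
Proof.
move=> T2 acT cT fT; set D := connect (adj (T :\ [set f1; f2])); split.
  move=> h; apply/negP => hs.
  have : D f1 f2.
    apply: (connect_sub _ (h f1 f2)) => u w; rewrite /adj !inE => /orP [uwT|/eqP E].
      by apply: connect1; rewrite /adj !inE.
    by apply: pair_conn hs; rewrite -E ?set21 ?set22.
  by apply/negP; apply: acyclic_sep.
move=> ns.
set K := connect (adj (T :\ [set f1; f2] :|: [set [set s1; s2]])).
have DK : forall u w, D u w -> K u w by move=> u w; apply: conn_mono; apply: subsetUl.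
have Ks : K s1 s2 by apply: connect1; rewrite /adj !inE eqxx orbT.
have Ds : forall u w, D u w -> D w u by move=> u w; rewrite /D conn_sym.
have Ks' : forall u w, K u w -> K w u by move=> u w; rewrite /K conn_sym.
have Kf : K f1 f2.
  case: (conn_two f1 f2 cT s1) => h1; case: (conn_two f1 f2 cT s2) => h2.
  - by case/negP: ns; apply: connect_trans (Ds _ _ h1) h2.
  - apply: connect_trans (DK _ _ h1) _; apply: connect_trans Ks _.
    by apply: DK; apply: Ds.
  - apply: connect_trans (DK _ _ h2) _; apply: connect_trans (Ks' _ _ Ks) _.
    by apply: DK; apply: Ds.
  - by case/negP: ns; apply: connect_trans (Ds _ _ h1) h2.
have Kall : forall v, K f1 v.
  move=> v; case: (conn_two f1 f2 cT v) => h; first exact: DK.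
  exact: connect_trans Kf (DK _ _ h).
move=> x y; apply: connect_trans (Kall y); apply: Ks'; apply: Kall.
Qed.

End Aux4.

Unset Implicit Arguments. Set Strict Implicit. Set Printing Implicit Defensive.

Theorem lemmaD1 (V : finType) (E T : {set {set V}}) (e se f s : {set V})
    (Ce Cs Ce' Cs' : {set {set V}}) :
  simple_edges E ->
  spanning_tree E T ->
  e \in T -> se \in E :\: T ->
  spanning_tree E ((T :\ e) :|: [set se]) ->
  f \in T :\ e ->
  s \in E :\: (T :|: [set se]) ->
  is_cycle Ce -> Ce \subset T :|: [set se] ->
  is_cycle Cs -> Cs \subset T :|: [set s] ->
  is_cycle Ce' -> Ce' \subset ((T :\ e) :|: [set se]) :|: [set e] ->
  is_cycle Cs' -> Cs' \subset ((T :\ e) :|: [set se]) :|: [set s] ->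
  ~ ((f \in Ce /\ e \in Cs) \/ (f \in Ce' /\ se \in Cs')) ->
  (connected_sp ((T :\ f) :|: [set s]) <->
   connected_sp ((((T :\ e) :|: [set se]) :\ f) :|: [set s])).
Proof.
move=> SE [TE cT acT] eT /setDP [seE seNT] [T'E cT' acT'] /setD1P [fne fT]
  /setDP [sE sNTse] cyCe CeS cyCs CsS _ _ _ _ hyp.
have T2 : forall c, c \in T -> #|c| = 2 by move=> c cT0; apply: SE; apply: (subsetP TE).
have T'2 : forall c, c \in (T :\ e) :|: [set se] -> #|c| = 2.
  by move=> c cT0; apply: SE; apply: (subsetP T'E).
have sNT : s \notin T by apply: contraNN sNTse; rewrite inE => ->.
have sse : s != se by apply: contraNN sNTse => /eqP ->; rewrite !inE eqxx orbT.
have /cards2P [f1 [f2 [_ fE]]] : #|f| == 2 by rewrite T2.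
have /cards2P [e1 [e2 [_ eE]]] : #|e| == 2 by rewrite T2.
have /cards2P [a1 [a2 [_ seE']]] : #|se| == 2 by rewrite SE.
have /cards2P [s1 [s2 [_ sE']]] : #|s| == 2 by rewrite SE.
subst f e se s.
set f := [set f1; f2]; set e := [set e1; e2]; set se := [set a1; a2]; set s := [set s1; s2].
have fT' : f \in (T :\ e) :|: [set se] by rewrite !inE fne fT.
have sNT' : s \notin (T :\ e) :|: [set se].
  by rewrite !inE (negbTE sse) (negbTE sNT) andbF.
suff EQ : connect (adj (T :\ f)) s1 s2 =
           connect (adj (((T :\ e) :|: [set se]) :\ f)) s1 s2.
  split => h.
  - apply/(conn_rem s1 s2 T'2 acT' cT' fT'); rewrite -EQ.
    exact: (conn_rem s1 s2 T2 acT cT fT).1 h.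
  - apply/(conn_rem s1 s2 T2 acT cT fT); rewrite EQ.
    exact: (conn_rem s1 s2 T'2 acT' cT' fT').1 h.
have hCe := cyc_mem T2 acT fT seNT cyCe CeS.
have hCs := cyc_mem T2 acT eT sNT cyCs CsS.
have nae := (conn_rem a1 a2 T2 acT cT eT).1 cT'.
have nee := acyclic_sep T2 acT eT.
have nff := acyclic_sep T2 acT fT.
have nff' := acyclic_sep T'2 acT' fT'.
have cs : forall (F : {set {set V}}) u w, connect (adj F) u w -> connect (adj F) w u.
  by move=> F u w; rewrite conn_sym.
have cases : connect (adj (T :\ f)) a1 a2 \/ connect (adj (T :\ e)) s1 s2.
  case A: (connect (adj (T :\ f)) a1 a2); first by left.
  case B: (connect (adj (T :\ e)) s1 s2); first by right.
  by exfalso; apply: hyp; left; rewrite hCe hCs A B.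
have S1 : (T :\ f) :\ e \subset (T :\ e :|: [set se]) :\ f.
  apply/subsetP => d; rewrite !inE.
  by case: (d \in T); case: (d == f); case: (d == e); case: (d == se).
have S2 : (T :\ f) :\ e \subset T :\ e.
  apply/subsetP => d; rewrite !inE.
  by case: (d \in T); case: (d == f); case: (d == e); case: (d == se).
have S3 : ((T :\ e :|: [set se]) :\ f) :\ se \subset T :\ f.
  apply/subsetP => d; rewrite !inE.
  by case: (d \in T); case: (d == f); case: (d == e); case: (d == se).
have S4 : ((T :\ e :|: [set se]) :\ f) :\ se \subset T :\ e.
  apply/subsetP => d; rewrite !inE.
  by case: (d \in T); case: (d == f); case: (d == e); case: (d == se).
case: cases => [hA|hB].
  have sub : forall u w, connect (adj ((T :\ e :|: [set se]) :\ f)) u w ->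
                         connect (adj (T :\ f)) u w.
    move=> u w; apply: connect_sub => p q; rewrite /adj !inE => /andP [nf /orP [/andP [ne pT]|/eqP Eq]].
      by apply: connect1; rewrite /adj !inE nf pT.
    by apply: pair_conn hA; move: Eq; rewrite /se => <-; rewrite ?set21 ?set22.
  apply/idP/idP => h; last exact: sub.
  have two := conn_two f1 f2 cT'.
  case: (two s1) => h1; case: (two s2) => h2.
  - exact: connect_trans (cs _ _ _ h1) h2.
  - by case/negP: nff; apply: connect_trans (sub _ _ h1) _; apply: connect_trans h (cs _ _ _ (sub _ _ h2)).
  - by case/negP: nff; apply: connect_trans (sub _ _ h2) _; apply: connect_trans (cs _ _ _ h) (cs _ _ _ (sub _ _ h1)).
  - exact: connect_trans (cs _ _ _ h1) h2.
apply/idP/idP => h.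
  case: (conn_split e1 e2 h) => [h0|[[h1 h2]|[h1 h2]]].
  - exact: conn_mono S1 h0.
  - case/negP: nee; apply: connect_trans (cs _ _ _ (conn_mono S2 h1)) _.
    exact: connect_trans hB (cs _ _ _ (conn_mono S2 h2)).
  - case/negP: nee; apply: (cs _); apply: connect_trans (cs _ _ _ (conn_mono S2 h1)) _.
    exact: connect_trans hB (cs _ _ _ (conn_mono S2 h2)).
case: (conn_split a1 a2 h) => [h0|[[h1 h2]|[h1 h2]]].
- exact: conn_mono S3 h0.
- case/negP: nae; apply: connect_trans (cs _ _ _ (conn_mono S4 h1)) _.
  exact: connect_trans hB (cs _ _ _ (conn_mono S4 h2)).
- case/negP: nae; apply: (cs _); apply: connect_trans (cs _ _ _ (conn_mono S4 h1)) _.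
  exact: connect_trans hB (cs _ _ _ (conn_mono S4 h2)).
Qed.
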